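(* Let $\mathcal C$ be a pointed category with finite coproducts and $E\in\mathcal C$ such that every object of $\mathcal C$ is isomorphic to a finite coproduct $E^{\vee k}$ of copies of $E$. Let $F,G\colon\mathcal C\to Ab$ be reduced functors which are polynomial of degree $\le n$, and let $\phi\colon F\to G$ be a natural transformation. Then the following are equivalent: (1) $\phi$ is a natural isomorphism; (2) $\phi_{E^{\vee k}}$ is an isomorphism for all $k\le n$; (3) $\phi_{E^{\vee n}}$ is an isomorphism; (4) $cr_k(\phi)_{E,\dots,E}$ is an isomorphism for all $1\le k\le n$.
   Context: - For a functor $F\colon\mathcal C\to Ab$: $cr_1F(X)=\ker(F(X)\to F(0))$ and $cr_2F(X,Y)=\ker\big((F(r_1),F(r_2))\colon F(X\vee Y)\to F(X)\oplus F(Y)\big)$, where $r_k$ are the coproduct retractions. - For $n\ge3$, $cr_nF(X_1,\dots,X_n)=cr_2\big(cr_{n-1}F(-,X_3,\dots,X_n)\big)(X_1,X_2)$. - $F$ is polynomial of degree $\le n$ if $cr_{n+1}F=0$. - $F$ is reduced if $F(0)=0$. - $cr_k(\phi)$ denotes the induced natural transformation $cr_kF\to cr_kG$. *)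

(* Defs.v *)
From HB Require Import structures.
From mathcomp Require Import all_boot all_algebra.
Set Implicit Arguments. Unset Strict Implicit. Unset Printing Implicit Defensive.
Import GRing.Theory.
Local Open Scope ring_scope.

(* A pointed category with (chosen) finite coproducts: a zero object
   (initial and terminal) and binary coproducts.  Composition is written in
   diagrammatic order: comp f g = g o f. *)
Record PCCat : Type := PCCat_mk {
  Obj : Type;
  Hom : Obj -> Obj -> Type;
  idm : forall X, Hom X X;
  comp : forall X Y Z, Hom X Y -> Hom Y Z -> Hom X Z;
  comp_idl : forall X Y (f : Hom X Y), comp (idm X) f = f;
  comp_idr : forall X Y (f : Hom X Y), comp f (idm Y) = f;
  comp_assoc : forall X Y Z W (f : Hom X Y) (g : Hom Y Z) (h : Hom Z W),
      comp f (comp g h) = comp (comp f g) h;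
  zero : Obj;
  to_zero : forall X, Hom X zero;
  to_zero_uniq : forall X (f : Hom X zero), f = to_zero X;
  from_zero : forall X, Hom zero X;
  from_zero_uniq : forall X (f : Hom zero X), f = from_zero X;
  cop : Obj -> Obj -> Obj;
  inl : forall X Y, Hom X (cop X Y);
  inr : forall X Y, Hom Y (cop X Y);
  copair : forall X Y Z, Hom X Z -> Hom Y Z -> Hom (cop X Y) Z;
  copair_inl : forall X Y Z (f : Hom X Z) (g : Hom Y Z),
      comp (inl X Y) (copair f g) = f;
  copair_inr : forall X Y Z (f : Hom X Z) (g : Hom Y Z),
      comp (inr X Y) (copair f g) = g;
  copair_uniq : forall X Y Z (h : Hom (cop X Y) Z),
      h = copair (comp (inl X Y) h) (comp (inr X Y) h)
}.

Arguments Hom {C} : rename.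
Arguments idm {C} X : rename.
Arguments comp {C X Y Z} : rename.
Arguments zero C : rename.
Arguments to_zero {C} X : rename.
Arguments from_zero {C} X : rename.
Arguments cop {C} : rename.
Arguments inl {C} X Y : rename.
Arguments inr {C} X Y : rename.
Arguments copair {C X Y Z} : rename.

Section Cat.
Variable C : PCCat.

Definition iso (X Y : Obj C) : Prop :=
  exists (f : Hom X Y) (g : Hom Y X), comp f g = idm X /\ comp g f = idm Y.

Definition zmor (X Y : Obj C) : Hom X Y := comp (to_zero X) (from_zero Y).

Definition r1 (X Y : Obj C) : Hom (cop X Y) X := copair (idm X) (zmor Y X).
Definition r2 (X Y : Obj C) : Hom (cop X Y) Y := copair (zmor X Y) (idm Y).

Definition copmap (A B A' B' : Obj C) (f : Hom A A') (g : Hom B B') :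
  Hom (cop A B) (cop A' B') := copair (comp f (inl A' B')) (comp g (inr A' B')).

(* copl X [:: Y1; ...; Ym] = (...((X v Y1) v Y2) ...) v Ym *)
Fixpoint copl (X : Obj C) (l : seq (Obj C)) : Obj C :=
  match l with [::] => X | Y :: l' => copl (cop X Y) l' end.

Fixpoint mapl (l : seq (Obj C)) : forall X X', Hom X X' -> Hom (copl X l) (copl X' l) :=
  match l return forall X X', Hom X X' -> Hom (copl X l) (copl X' l) with
  | [::] => fun X X' f => f
  | Y :: l' => fun X X' f => mapl l' (copmap f (idm Y))
  end.

Definition Epow (E : Obj C) (k : nat) : Obj C :=
  match k with 0 => zero C | k'.+1 => copl E (nseq k' E) end.

End Cat.
Arguments iso {C}.
Arguments zmor {C}.
Arguments r1 {C}.
Arguments r2 {C}.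
Arguments copmap {C A B A' B'}.
Arguments copl {C}.
Arguments mapl {C} l {X X'}.
Arguments Epow {C}.

Record AbFunctor (C : PCCat) := AbFunctor_mk {
  Fo : Obj C -> zmodType;
  Fm : forall X Y : Obj C, Hom X Y -> Fo X -> Fo Y;
  Fm_sub : forall X Y (f : Hom X Y) (a b : Fo X), Fm f (a - b) = Fm f a - Fm f b;
  Fm_id : forall X (a : Fo X), Fm (idm X) a = a;
  Fm_comp : forall X Y Z (f : Hom X Y) (g : Hom Y Z) (a : Fo X),
      Fm (comp f g) a = Fm g (Fm f a)
}.
Arguments Fo {C} F X : rename.
Arguments Fm {C} F {X Y} f : rename.

Record NatTrans (C : PCCat) (F G : AbFunctor C) := NatTrans_mk {
  nt : forall X, Fo F X -> Fo G X;
  nt_sub : forall X (a b : Fo F X), nt (a - b) = nt a - nt b;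
  nt_nat : forall X Y (f : Hom X Y) (a : Fo F X), nt (Fm F f a) = Fm G f (nt a)
}.
Arguments nt {C F G} p X : rename.

Section CrossEffects.
Variables (C : PCCat) (F : AbFunctor C).

(* crP l X is the subgroup cr_{m+1} F (X, Y1, ..., Ym) of F (copl X l),
   l = [:: Y1; ...; Ym], following the iterated definition
     cr_1 F (X) = ker (F X -> F 0),
     cr_n F (X1, X2, rest) = cr_2 (cr_{n-1} F (-, rest)) (X1, X2)
       = ker (cr_{n-1}F(X1 v X2, rest) -> cr_{n-1}F(X1,rest) (+) cr_{n-1}F(X2,rest)). *)
Fixpoint crP (l : seq (Obj C)) : forall X : Obj C, Fo F (copl X l) -> Prop :=
  match l return forall X : Obj C, Fo F (copl X l) -> Prop with
  | [::] => fun X (x : Fo F X) => Fm F (to_zero X) x = 0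
  | Y :: l' => fun X x =>
      [/\ @crP l' (cop X Y) x,
          Fm F (mapl l' (r1 X Y)) x = 0 &
          Fm F (mapl l' (r2 X Y)) x = 0]
  end.
Arguments crP : clear implicits.

Definition reduced : Prop := forall x : Fo F (zero C), x = 0.

(* F is polynomial of degree <= n: cr_{n+1} F = 0 *)
Definition poly_le (n : nat) : Prop :=
  forall (X : Obj C) (l : seq (Obj C)), size l = n ->
    forall x : Fo F (copl X l), crP l X x -> x = 0.

End CrossEffects.
Arguments crP {C} F l X x.

Definition bij_on (A B : Type) (P : A -> Prop) (Q : B -> Prop) (f : A -> B) : Prop :=
  [/\ forall x, P x -> Q (f x),
      forall x y, P x -> P y -> f x = f y -> x = y &
      forall y, Q y -> exists2 x, P x & f x = y].

(* cr_k(phi)_{E,...,E} is an isomorphism (k >= 1): the restriction of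
   phi_{E v ... v E} to cr_k F (E,...,E) -> cr_k G (E,...,E) is bijective *)
Definition cr_iso (C : PCCat) (F G : AbFunctor C) (phi : NatTrans F G)
  (E : Obj C) (k : nat) : Prop :=
  bij_on (crP F (nseq k.-1 E) E) (crP G (nseq k.-1 E) E)
         (nt phi (copl E (nseq k.-1 E))).

(* Main.v *)
Require Import Defs.
From mathcomp Require Import all_boot all_algebra.
Require Import Defs.
From mathcomp Require Import zify.
Set Implicit Arguments. Unset Strict Implicit. Unset Printing Implicit Defensive.
Import GRing.Theory.
Section CatLemmas.
Variable C : PCCat.
Implicit Types X Y Z A B : Obj C.

Lemma copair_ext X Y Z (h h' : Hom (cop X Y) Z) :
  comp (inl X Y) h = comp (inl X Y) h' -> comp (inr X Y) h = comp (inr X Y) h' -> h = h'.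
Proof. by move=> e1 e2; rewrite (copair_uniq h) (copair_uniq h') e1 e2. Qed.

Lemma zmorL X Y Z (f : Hom Y Z) : comp (zmor X Y) f = zmor X Z.
Proof. by rewrite /zmor -comp_assoc (from_zero_uniq (comp (from_zero Y) f)). Qed.

Lemma zmorR X Y Z (f : Hom X Y) : comp f (zmor Y Z) = zmor X Z.
Proof. by rewrite /zmor comp_assoc (to_zero_uniq (comp f (to_zero Y))). Qed.

Lemma copmap_comp A B (A' B' A'' B'' : Obj C) (f : Hom A A') (g : Hom B B') (f' : Hom A' A'') (g' : Hom B' B'') :
  copmap (comp f f') (comp g g') = comp (copmap f g) (copmap f' g').
Proof.
apply: copair_ext; rewrite /copmap ?copair_inl ?copair_inr comp_assoc ?copair_inl ?copair_inr.
  by rewrite -!comp_assoc copair_inl.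
by rewrite -!comp_assoc copair_inr.
Qed.

Lemma copmap_id A B : copmap (idm A) (idm B) = idm (cop A B).
Proof.
apply: copair_ext; rewrite /copmap ?copair_inl ?copair_inr comp_idl comp_idr //.
Qed.

Lemma mapl_comp (l : seq (Obj C)) : forall X Y Z (f : Hom X Y) (g : Hom Y Z),
  mapl l (comp f g) = comp (mapl l f) (mapl l g).
Proof.
elim: l => [//|W l IH] X Y Z f g /=.
by rewrite -IH -copmap_comp comp_idl.
Qed.

Lemma mapl_id (l : seq (Obj C)) : forall X, mapl l (idm X) = idm (copl X l).
Proof. elim: l => [//|W l IH] X /=; by rewrite copmap_id IH. Qed.

Lemma inl_r1 X Y : comp (inl X Y) (r1 X Y) = idm X.
Proof. by rewrite /r1 copair_inl. Qed.
Lemma inr_r1 X Y : comp (inr X Y) (r1 X Y) = zmor Y X.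
Proof. by rewrite /r1 copair_inr. Qed.
Lemma inl_r2 X Y : comp (inl X Y) (r2 X Y) = zmor X Y.
Proof. by rewrite /r2 copair_inl. Qed.
Lemma inr_r2 X Y : comp (inr X Y) (r2 X Y) = idm Y.
Proof. by rewrite /r2 copair_inr. Qed.

Lemma copmap_r1 X X' Y (f : Hom X X') :
  comp (copmap f (idm Y)) (r1 X' Y) = comp (r1 X Y) f.
Proof.
apply: copair_ext; rewrite !comp_assoc /copmap ?copair_inl ?copair_inr.
  by rewrite -comp_assoc inl_r1 comp_idr comp_idl.
by rewrite -comp_assoc inr_r1 comp_idl zmorL.
Qed.

Lemma copmap_r2 X X' Y (f : Hom X X') :
  comp (copmap f (idm Y)) (r2 X' Y) = r2 X Y.
Proof.
apply: copair_ext; rewrite !comp_assoc /copmap ?copair_inl ?copair_inr.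
  by rewrite -comp_assoc inl_r2 zmorR.
by rewrite -comp_assoc inr_r2 comp_idl.
Qed.

Lemma r2_inr Y : comp (r2 (zero C) Y) (inr (zero C) Y) = idm _.
Proof.
apply: copair_ext; rewrite comp_assoc.
  by rewrite inl_r2 comp_idr (from_zero_uniq (comp _ _)) (from_zero_uniq (inl _ _)).
by rewrite inr_r2 comp_idl comp_idr.
Qed.

Lemma copl_rcons (l : seq (Obj C)) : forall X Y, copl X (rcons l Y) = cop (copl X l) Y.
Proof. by elim: l => [//|W l IH] X Y /=. Qed.

Lemma EpowS (E : Obj C) k : Epow E k.+2 = cop (Epow E k.+1) E.
Proof.
rewrite /Epow -copl_rcons; congr copl.
by elim: k => [//|k IH] /=; rewrite -IH.
Qed.

Definition Retract X Y := exists (i : Hom X Y) (r : Hom Y X), comp i r = idm X.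

Lemma Retract_refl X : Retract X X.
Proof. by exists (idm X), (idm X); rewrite comp_idl. Qed.

Lemma Retract_trans X Y Z : Retract X Y -> Retract Y Z -> Retract X Z.
Proof.
move=> [i [r e]] [i' [r' e']]; exists (comp i i'), (comp r' r).
by rewrite comp_assoc -(comp_assoc i) e' comp_idr e.
Qed.

Lemma Retract_zero X : Retract (zero C) X.
Proof.
exists (from_zero X), (to_zero X).
by rewrite (to_zero_uniq (comp _ _)) (to_zero_uniq (idm _)).
Qed.

Lemma Retract_cop X Y : Retract X (cop X Y).
Proof. by exists (inl X Y), (r1 X Y); rewrite inl_r1. Qed.

Lemma Retract_Epow (E : Obj C) k m : k <= m -> Retract (Epow E k) (Epow E m).
Proof.
elim: m => [|m IH]; first by rewrite leqn0 => /eqP ->; apply: Retract_refl.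
rewrite leq_eqVlt => /orP [/eqP ->|]; first exact: Retract_refl.
rewrite ltnS => /IH H; apply: Retract_trans H _.
case: m {IH} => [|m]; first exact: Retract_zero.
rewrite EpowS; exact: Retract_cop.
Qed.

End CatLemmas.
Section FunLemmas.
Local Open Scope ring_scope.
Variables (C : PCCat) (F : AbFunctor C).
Implicit Types X Y Z : Obj C.

Lemma Fm0 X Y (f : Hom X Y) : Fm F f 0 = 0.
Proof. by rewrite -(subrr 0) Fm_sub subrr. Qed.
Lemma FmN X Y (f : Hom X Y) a : Fm F f (- a) = - Fm F f a.
Proof. by rewrite -[- a]sub0r Fm_sub Fm0 sub0r. Qed.
Lemma FmD X Y (f : Hom X Y) a b : Fm F f (a + b) = Fm F f a + Fm F f b.
Proof. by rewrite -[b in a + b]opprK Fm_sub FmN opprK. Qed.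

Definition Fl (l : seq (Obj C)) X Y (f : Hom X Y) := Fm F (mapl l f).
Arguments Fl l {X Y} f.

Lemma Fl_sub l X Y (f : Hom X Y) a b : Fl l f (a - b) = Fl l f a - Fl l f b.
Proof. exact: Fm_sub. Qed.
Lemma FlD l X Y (f : Hom X Y) a b : Fl l f (a + b) = Fl l f a + Fl l f b.
Proof. exact: FmD. Qed.
Lemma Fl0 l X Y (f : Hom X Y) : Fl l f 0 = 0.
Proof. exact: Fm0. Qed.

Lemma Fl_comp l X Y Z (f : Hom X Y) (g : Hom Y Z) a :
  Fl l (comp f g) a = Fl l g (Fl l f a).
Proof. by rewrite /Fl mapl_comp Fm_comp. Qed.
Lemma Fl_id l X a : Fl l (idm X) a = a.
Proof. by rewrite /Fl mapl_id Fm_id. Qed.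

Lemma crP0 l : forall X, crP F l X 0.
Proof. elim: l => [|Y l IH] X /=; first by rewrite Fm0. by split; rewrite ?Fm0. Qed.

Lemma crP_sub l : forall X a b, crP F l X a -> crP F l X b -> crP F l X (a - b).
Proof.
elim: l => [|Y l IH] X a b /=; first by rewrite Fm_sub => -> ->; rewrite subrr.
by case=> h1 h2 h3 [k1 k2 k3]; split; [exact: IH | rewrite Fm_sub h2 k2 subrr | rewrite Fm_sub h3 k3 subrr].
Qed.

Lemma crP_opp l X a : crP F l X a -> crP F l X (- a).
Proof. by move=> h; rewrite -sub0r; apply: crP_sub => //; apply: crP0. Qed.

Lemma crP_add l X a b : crP F l X a -> crP F l X b -> crP F l X (a + b).
Proof. by move=> ha hb; rewrite -(opprK b); apply: crP_sub => //; apply: crP_opp. Qed.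

Lemma crP_map l : forall X X' (f : Hom X X') x, crP F l X x -> crP F l X' (Fl l f x).
Proof.
elim: l => [|Y l IH] X X' f x /=.
  by rewrite /Fl /= -Fm_comp (to_zero_uniq (comp f _)) => ->.
case=> h1 h2 h3; rewrite /Fl /=; split.
- exact: (IH _ _ (copmap f (idm Y))).
- by rewrite -Fm_comp -mapl_comp copmap_r1 mapl_comp Fm_comp h2 Fm0.
- by rewrite -Fm_comp -mapl_comp copmap_r2.
Qed.

Lemma crP_zero l : forall x, crP F l (zero C) x -> x = 0.
Proof.
elim: l => [|Y l IH] x /=.
  by rewrite -(to_zero_uniq (idm (zero C))) Fm_id.
case=> h1 h2 h3.
have e : Fl l (idm (cop (zero C) Y)) x = x by apply: Fl_id.
by rewrite -e -(r2_inr Y) Fl_comp /Fl h3 Fm0.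
Qed.

Lemma Fl_zmor l X Y y : crP F l X y -> Fl l (zmor X Y) y = 0.
Proof.
move=> h; rewrite /zmor Fl_comp.
by rewrite (crP_zero (crP_map (to_zero X) h)) /Fl Fm0.
Qed.

Definition dec l X Y (x : Fo F (copl (cop X Y) l)) :=
  x - (Fl l (inl X Y) (Fl l (r1 X Y) x) + Fl l (inr X Y) (Fl l (r2 X Y) x)).

Lemma dec_crP l X Y x : crP F l (cop X Y) x -> crP F (Y :: l) X (dec x).
Proof.
move=> h; have h1 := crP_map (r1 X Y) h; have h2 := crP_map (r2 X Y) h.
split.
- apply: crP_sub => //; apply: crP_add; exact: crP_map.
- change (Fl l (r1 X Y) (dec x) = 0); rewrite /dec Fl_sub FlD -(Fl_comp (inl X Y) (r1 X Y)) -(Fl_comp (inr X Y) (r1 X Y)) inl_r1 inr_r1 Fl_id Fl_zmor //.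
  by rewrite addr0 subrr.
- change (Fl l (r2 X Y) (dec x) = 0); rewrite /dec Fl_sub FlD -(Fl_comp (inl X Y) (r2 X Y)) -(Fl_comp (inr X Y) (r2 X Y)) inl_r2 inr_r2 Fl_id Fl_zmor //.
  by rewrite add0r subrr.
Qed.

Lemma crP_big n (polyF : poly_le F n) l : forall X x, (n <= size l)%N -> crP F l X x -> x = 0.
Proof.
elim: l => [|Y l IH] X x hn h.
  by apply: (polyF X [::] _ _ h); apply/eqP; rewrite eq_sym -leqn0.
have [e|ne] := eqVneq (size (Y :: l)) n; first exact: (polyF X (Y :: l) e x h).
case: h => h _ _; apply: IH h.
by move: hn ne; rewrite /= leq_eqVlt eq_sym => /orP [->|].
Qed.

End FunLemmas.
Arguments Fl {C} F l {X Y} f _.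
Section NT.
Local Open Scope ring_scope.
Variables (C : PCCat) (F G : AbFunctor C) (phi : NatTrans F G).
Implicit Types X Y Z : Obj C.

Lemma nt0 X : nt phi X 0 = 0.
Proof. by rewrite -(subrr 0) nt_sub subrr. Qed.
Lemma ntN X a : nt phi X (- a) = - nt phi X a.
Proof. by rewrite -[- a]sub0r nt_sub nt0 sub0r. Qed.
Lemma ntD X a b : nt phi X (a + b) = nt phi X a + nt phi X b.
Proof. by rewrite -[b in a + b]opprK nt_sub ntN opprK. Qed.

Lemma nt_Fl (l : seq (Obj C)) X Y (f : Hom X Y) a :
  nt phi _ (Fl F l f a) = Fl G l f (nt phi _ a).
Proof. exact: nt_nat. Qed.

Lemma crP_nat l : forall X x, crP F l X x -> crP G l X (nt phi _ x).
Proof.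
elim: l => [|Y l IH] X x /=; first by rewrite -nt_nat => ->; rewrite nt0.
case=> h1 h2 h3; split; first exact: IH.
- by rewrite -nt_nat h2 nt0.
- by rewrite -nt_nat h3 nt0.
Qed.

Definition Bl (l : seq (Obj C)) X :=
  bij_on (crP F l X) (crP G l X) (nt phi (copl X l)).

Lemma Bl_triv l X : (forall x, crP F l X x -> x = 0) -> (forall y, crP G l X y -> y = 0) -> Bl l X.
Proof.
move=> hF hG; split.
- by move=> x /hF ->; rewrite nt0; apply: crP0.
- by move=> x y /hF -> /hF ->.
- by move=> y /hG ->; exists 0; [apply: crP0 | rewrite nt0].
Qed.

Lemma split_fwd l X Y : Bl l X -> Bl l Y -> Bl (Y :: l) X -> Bl l (cop X Y).
Proof.
move=> [_ iX sX] [_ iY sY] [_ iXY sXY]; split.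
- exact: crP_nat.
- move=> x1 x2 h1 h2 e.
  have h := crP_sub h1 h2.
  have e0 : nt phi _ (x1 - x2) = 0 by rewrite nt_sub e subrr.
  have ha : Fl F l (r1 X Y) (x1 - x2) = 0.
    apply: iX; [exact: crP_map | exact: crP0 |].
    by rewrite nt_Fl e0 nt0 Fl0.
  have hb : Fl F l (r2 X Y) (x1 - x2) = 0.
    apply: iY; [exact: crP_map | exact: crP0 |].
    by rewrite nt_Fl e0 nt0 Fl0.
  have hd := dec_crP h.
  rewrite /dec ha hb !Fl0 addr0 subr0 in hd.
  have : x1 - x2 = 0.
    apply: iXY => //; first exact: crP0.
    by rewrite e0 nt0.
  by move/eqP; rewrite subr_eq0 => /eqP.
- move=> y hy.
  have [a0 ha0 ea] := sX _ (crP_map (r1 X Y) hy).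
  have [b0 hb0 eb] := sY _ (crP_map (r2 X Y) hy).
  have [c0 hc0 ec] := sXY _ (dec_crP hy).
  exists (c0 + (Fl F l (inl X Y) a0 + Fl F l (inr X Y) b0)).
    apply: crP_add; first by case: hc0.
    by apply: crP_add; apply: crP_map.
  rewrite !ntD !nt_Fl ea eb.
  have -> : nt phi (copl (cop X Y) l) c0 = dec y by [].
  by rewrite /dec subrK.
Qed.

Lemma split_rev l X Y : Bl l (cop X Y) -> Bl l X -> Bl l Y -> Bl (Y :: l) X.
Proof.
move=> [_ iXY sXY] [_ iX _] [_ iY _]; split.
- exact: crP_nat.
- move=> x1 x2 [h1 _ _] [h2 _ _]; exact: iXY.
- move=> y [hy hy1 hy2].
  have [x hx ex] := sXY _ hy.
  exists x => //; split => //.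
  + change (Fl F l (r1 X Y) x = 0); apply: iX; [exact: crP_map | exact: crP0 |].
    by rewrite nt_Fl nt0 ex.
  + change (Fl F l (r2 X Y) x = 0); apply: iY; [exact: crP_map | exact: crP0 |].
    by rewrite nt_Fl nt0 ex.
Qed.

Lemma inj_surj_bij (A B : choiceType) (f : A -> B) :
  injective f -> (forall y, exists x, f x = y) -> bijective f.
Proof.
move=> inj sur.
have sur' : forall y, exists x, f x == y by move=> y; have [x e] := sur y; exists x; apply/eqP.
exists (fun y => xchoose (sur' y)).
- by move=> x; apply: inj; apply/eqP; apply: (xchooseP (sur' (f x))).
- by move=> y; apply/eqP; apply: (xchooseP (sur' y)).
Qed.

Lemma Bl_nil X : reduced F -> reduced G -> (Bl [::] X <-> bijective (nt phi X)).
Proof.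
move=> rF rG; have tF : forall x, crP F [::] X x by move=> x /=; apply: rF.
have tG : forall x, crP G [::] X x by move=> x /=; apply: rG.
split.
- move=> [_ i s]; apply: inj_surj_bij.
    by move=> x y; apply: i.
  by move=> y; have [x _ e] := s y (tG y); exists x.
- move=> [g c1 c2]; split => //.
  + by move=> x y _ _; apply: (can_inj c1).
  + by move=> y _; exists (g y).
Qed.

Lemma ret_bij X Y : Retract X Y -> bijective (nt phi Y) -> bijective (nt phi X).
Proof.
move=> [i [r e]] [g c1 c2].
exists (fun y => Fm F r (g (Fm G i y))).
- move=> x; rewrite -nt_nat c1 -Fm_comp e; exact: Fm_id.
- move=> y; rewrite nt_nat c2 -Fm_comp e; exact: Fm_id.
Qed.

End NT.
Theorem proposition1p17 (C : PCCat) (E : Obj C)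
  (hE : forall X : Obj C, exists k : nat, iso X (Epow E k))
  (n : nat) (F G : AbFunctor C)
  (redF : reduced F) (redG : reduced G)
  (polyF : poly_le F n) (polyG : poly_le G n)
  (phi : NatTrans F G) :
  let P1 := forall X : Obj C, bijective (nt phi X) in
  let P2 := forall k : nat, k <= n -> bijective (nt phi (Epow E k)) in
  let P3 := bijective (nt phi (Epow E n)) in
  let P4 := forall k : nat, 1 <= k <= n -> cr_iso phi E k in
  [/\ P1 <-> P2, P1 <-> P3 & P1 <-> P4].
Proof.
move=> P1 P2 P3 P4.
have P12 : P1 -> P2 by move=> h k _; apply: h.
have P23 : P2 -> P3 by move=> h; apply: h.
have P32 : P3 -> P2 by move=> h k hk; apply: (ret_bij (Retract_Epow E hk) h).
have P24 : P2 -> P4.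
  move=> h.
  have cl : forall m k, 0 < k -> m + k <= n -> Bl phi (nseq m E) (Epow E k).
    elim=> [|m IH] k hk hmk.
      by apply/Bl_nil => //; apply: h; rewrite add0n in hmk.
    case: k hk hmk => // k _ hmk.
    change (Bl phi (E :: nseq m E) (Epow E k.+1)); apply: split_rev.
    - rewrite -EpowS; apply: IH => //; lia.
    - apply: IH => //; lia.
    - apply: (IH 1) => //; lia.
  case=> // k /andP [_ hk]; apply: (cl k 1) => //; lia.
have P41 : P4 -> P1.
  move=> h.
  have base : forall m, Bl phi (nseq m E) E.
    move=> m; case: (ltnP m n) => hm; first exact: (h m.+1).
    apply: Bl_triv => x hx.
      by apply: (crP_big polyF _ hx); rewrite size_nseq.
    by apply: (crP_big polyG _ hx); rewrite size_nseq.
  have cl : forall k m, Bl phi (nseq m E) (Epow E k.+1).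
    elim=> [|k IH] m; first exact: base.
    rewrite EpowS; apply: split_fwd; [exact: IH | exact: base | exact: (IH m.+1)].
  move=> X; have [k [f [g [e1 _]]]] := hE X.
  apply: (ret_bij (Y:=Epow E k)); first by exists f, g.
  apply/(Bl_nil phi) => //; case: k {f g e1} => [|k]; last exact: (cl k 0).
  by apply: Bl_triv => x; apply: crP_zero.
split; split; auto.
Qed.
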